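(* Fix $E^2=\operatorname{diag}(\lambda_1,\lambda_2,\lambda_3)$ with $\lambda_i>0$ and $E^1=0$, and let $a=\frac{\partial E^3_{111}}{\partial E^1_1}$, $b=\frac{\partial E^3_{112}}{\partial E^1_2}$, $c=\frac{\partial E^3_{113}}{\partial E^1_3}$, $d=\frac{\partial E^3_{122}}{\partial E^1_1}$, all evaluated at $E^1=0$. Let $J_x\in\mathbb{R}^{9\times9}$ be the matrix whose only nonzero entries are $(J_x)_{1,2}=(J_x)_{2,5}=(J_x)_{3,6}=(J_x)_{4,7}=1$, $(J_x)_{5,2}=a$, $(J_x)_{6,3}=b$, $(J_x)_{7,4}=c$, $(J_x)_{8,2}=d$ (this is the Jacobian of the $x$-flux $f_x=(E^1_1,E^2_{11},E^2_{12},E^2_{13},E^3_{111},E^3_{112},E^3_{113},E^3_{122},E^3_{123})$ with respect to $E=(E^0,E^1_1,E^1_2,E^1_3,E^2_{11},E^2_{12},E^2_{13},E^2_{22},E^2_{23})$ at this state). Then $J_x$ is real diagonalizable if and only if $\sigma_1>0$, equivalently if and only if $3\lambda_1^2+\lambda_1(\lambda_2+\lambda_3)-\lambda_2\lambda_3>0$.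
   Context: With $R_i=e_i$ and $F_i=E^1_i$: for $x,y>0$, $g(x,y;a',b')=\dfrac{2(x-a'^2/x)(y-b'^2/y)(x-a'^2/x+y-b'^2/y)}{3(x+y)^2}$; for $\{i,j,k\}=\{1,2,3\}$, $\sigma_i=\lambda_i-g(\lambda_i,\lambda_j;F_i,F_j)-g(\lambda_i,\lambda_k;F_i,F_k)$, $w_i=\sigma_i+2g(\lambda_j,\lambda_k;F_j,F_k)$; $\sigma_1$ in the claim is evaluated at $E^1=0$. With $\tau_l=\dfrac{\sigma_l^2+2F_l^2-3w_l\sigma_l}{2F_l^2-w_l\sigma_l-w_l^2}$, the 3D $B_2$ third-order closure is $E^3_{lll}=F_l\tau_l$, $E^3_{ijk}=\frac{F_l}{2}(1-\tau_l)$ when $(i,j,k)$ is a permutation of $(l,m,m)$ with $m\ne l$, and $E^3_{123}=0$; the derivatives $a,b,c,d$ are taken with respect to $E^1$ with $E^0,E^2$ (hence $R_i=e_i$) fixed. *)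

(* Defs.v *)
From Stdlib Require Import Reals Lra Lia.
Open Scope R_scope.

Definition gfun (x y a' b' : R) : R :=
  2 * (x - a' ^ 2 / x) * (y - b' ^ 2 / y) * (x - a' ^ 2 / x + y - b' ^ 2 / y)
  / (3 * (x + y) ^ 2).

(* Indices 1,2,3. lam i = lambda_i, F i = F_i = E^1_i (R_i = e_i). *)
Definition oth1 (i : nat) : nat := if Nat.eqb i 1 then 2%nat else 1%nat.
Definition oth2 (i : nat) : nat := if Nat.eqb i 3 then 2%nat else 3%nat.

Definition sigmaB (lam F : nat -> R) (i : nat) : R :=
  let j := oth1 i in let k := oth2 i in
  lam i - gfun (lam i) (lam j) (F i) (F j) - gfun (lam i) (lam k) (F i) (F k).

Definition wfun (lam F : nat -> R) (i : nat) : R :=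
  let j := oth1 i in let k := oth2 i in
  sigmaB lam F i + 2 * gfun (lam j) (lam k) (F j) (F k).

Definition tau (lam F : nat -> R) (l : nat) : R :=
  let s := sigmaB lam F l in let w := wfun lam F l in
  (s ^ 2 + 2 * F l ^ 2 - 3 * w * s) / (2 * F l ^ 2 - w * s - w ^ 2).

Definition E3 (lam F : nat -> R) (i j k : nat) : R :=
  if andb (Nat.eqb i j) (Nat.eqb j k) then F i * tau lam F i
  else if andb (negb (Nat.eqb i j)) (andb (negb (Nat.eqb j k)) (negb (Nat.eqb i k)))
  then 0
  else
    let l := if Nat.eqb i j then k else if Nat.eqb i k then j else i in
    F l / 2 * (1 - tau lam F l).

Definition vec3 (x y z : R) : nat -> R :=
  fun n => match n with 1%nat => x | 2%nat => y | 3%nat => z | _ => 0 end.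

(* 9x9 real matrices, indices 1..9 *)
Definition mat := nat -> nat -> R.

Definition mmul (A B : mat) : mat :=
  fun i j => sum_f_R0 (fun k => A i (S k) * B (S k) j) 8.

Definition in9 (i : nat) : Prop := (1 <= i <= 9)%nat.

Definition real_diagonalizable (A : mat) : Prop :=
  exists P Q D : mat,
    (forall i j, in9 i -> in9 j ->
       mmul P Q i j = (if Nat.eqb i j then 1 else 0) /\
       mmul Q P i j = (if Nat.eqb i j then 1 else 0)) /\
    (forall i j, in9 i -> in9 j -> i <> j -> D i j = 0) /\
    (forall i j, in9 i -> in9 j -> A i j = mmul (mmul P D) Q i j).

Definition Jx (a b c d : R) : mat :=
  fun i j =>
    match i, j with
    | 1%nat, 2%nat => 1 | 2%nat, 5%nat => 1 | 3%nat, 6%nat => 1 | 4%nat, 7%nat => 1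
    | 5%nat, 2%nat => a | 6%nat, 3%nat => b | 7%nat, 4%nat => c | 8%nat, 2%nat => d
    | _, _ => 0
    end.

(* Main.v *)
Require Import Defs.
From Stdlib Require Import Reals Lra Lia.
From Coquelicot Require Import Coquelicot.
Open Scope R_scope.

Lemma deriv_tT (f T : R -> R) a : (forall t, f t = t * T t) -> ex_derive T 0 ->
  derivable_pt_lim f 0 a -> a = T 0.
Proof. intros Hf HT Ha. apply is_derive_Reals in Ha. apply is_derive_unique in Ha. rewrite <- Ha.
 apply is_derive_unique. eapply is_derive_ext. intro; symmetry; apply Hf.
 assert (H := is_derive_mult (fun t => t) T 0 1 (Derive T 0) (is_derive_id 0) (Derive_correct _ _ HT) Rmult_comm).
 simpl in H. replace (T 0) with (plus (mult 1 (T 0)) (mult 0 (Derive T 0))). exact H.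
 unfold plus, mult; simpl. ring. Qed.

Lemma gder x y : x<>0 -> y<>0 -> x+y<>0 -> ex_derive (fun t => gfun x y t 0) 0.
Proof. intros. unfold gfun. auto_derive. auto. Qed.

Lemma sd (G1 G2 : R -> R) l : ex_derive G1 0 -> ex_derive G2 0 -> ex_derive (fun t => l - G1 t - G2 t) 0.
Proof. intros. auto_derive. auto. Qed.

Lemma wd (S : R -> R) g : ex_derive S 0 -> ex_derive (fun t => S t + 2 * g) 0.
Proof. intros. auto_derive. auto. Qed.

Lemma taud (F s w : R->R): ex_derive s 0 -> ex_derive w 0 -> ex_derive F 0 -> 2*F 0^2 - w 0 * s 0 - w 0^2 <> 0 -> ex_derive (fun t => (s t ^2 + 2 * F t^2 - 3 * w t * s t)/(2*F t^2 - w t * s t - w t ^2)) 0.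
Proof. intros. auto_derive. repeat split; auto. Qed.

Lemma halfd (T : R -> R) : ex_derive T 0 -> ex_derive (fun t => (1 - T t) / 2) 0.
Proof. intros. auto_derive. auto. Qed.

Lemma idd : ex_derive (fun t : R => t) 0.
Proof. auto_derive. auto. Qed.
Lemma gfun0 x y : 0 < x -> 0 < y -> gfun x y 0 0 = 2*x*y/(3*(x+y)).
Proof. intros. unfold gfun. field. lra. Qed.

Lemma gpos x y : 0 < x -> 0 < y -> 0 < gfun x y 0 0.
Proof. intros. rewrite gfun0 by auto. apply Rdiv_lt_0_compat; nra. Qed.

Lemma key x y z : 0 < x -> 0 < y -> 0 < z ->
  0 < x - gfun x y 0 0 - gfun x z 0 0 + gfun y z 0 0.
Proof. intros. rewrite !gfun0 by auto.
  replace (x - 2 * x * y / (3 * (x + y)) - 2 * x * z / (3 * (x + z)) + 2 * y * z / (3 * (y + z)))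
  with ((3*(x*x*x*y)+3*(x*x*x*z)+x*x*y*y+x*x*z*z+x*y*y*z+x*y*z*z+4*(x*x*y*z)+2*(y*y*z*z))
        / (3*(x+y)*(x+z)*(y+z))) by (field; lra).
  apply Rdiv_lt_0_compat.
  repeat apply Rplus_lt_0_compat; repeat apply Rmult_lt_0_compat; lra.
  repeat apply Rmult_lt_0_compat; lra. Qed.

Definition Tf (s g : R) : R :=
  ((s ^ 2 + 2 * 0 ^ 2 - 3 * (s + 2 * g) * s) / (2 * 0 ^ 2 - (s + 2 * g) * s - (s + 2 * g) ^ 2)).

Lemma Tden s g : 0 < s + g -> 0 < g -> 2 * 0 ^ 2 - (s + 2 * g) * s - (s + 2 * g) ^ 2 <> 0.
Proof. intros. nra. Qed.

Lemma Tf_sign s g : 0 < s + g -> 0 < g -> (0 < Tf s g <-> 0 < s).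
Proof. intros. unfold Tf.
  assert (Hd := Tden s g H H0).
  replace ((s ^ 2 + 2 * 0 ^ 2 - 3 * (s + 2 * g) * s) / (2 * 0 ^ 2 - (s + 2 * g) * s - (s + 2 * g) ^ 2))
  with (s * ((2*(s+g) + 4*g) / ((s+2*g)*(2*(s+g))))) by (field; nra).
  assert (0 < (2*(s+g) + 4*g) / ((s+2*g)*(2*(s+g)))) by (apply Rdiv_lt_0_compat; nra).
  split; intro; nra. Qed.

Lemma Tf_half s g : 0 < s + g -> 0 < g -> 0 < (1 - Tf s g) / 2.
Proof. intros. unfold Tf.
  assert (Hd := Tden s g H H0).
  replace ((1 - (s ^ 2 + 2 * 0 ^ 2 - 3 * (s + 2 * g) * s) / (2 * 0 ^ 2 - (s + 2 * g) * s - (s + 2 * g) ^ 2)) / 2)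
  with ((2*g)*(2*g) / (2 * ((s+2*g)*(2*(s+g))))) by (field; nra).
  apply Rdiv_lt_0_compat; nra. Qed.

Lemma s1_poly l1 l2 l3 : 0 < l1 -> 0 < l2 -> 0 < l3 ->
  (0 < l1 - gfun l1 l2 0 0 - gfun l1 l3 0 0 <-> 0 < 3 * l1 ^ 2 + l1 * (l2 + l3) - l2 * l3).
Proof. intros. rewrite !gfun0 by auto.
  replace (l1 - 2 * l1 * l2 / (3 * (l1 + l2)) - 2 * l1 * l3 / (3 * (l1 + l3)))
  with (l1 * (3 * l1 ^ 2 + l1 * (l2 + l3) - l2 * l3) / (3*(l1+l2)*(l1+l3))) by (field; lra).
  assert (0 < 3*(l1+l2)*(l1+l3)) by (repeat apply Rmult_lt_0_compat; lra).
  split; intro.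
  - apply Rdiv_pos_cases in H3 as [[]|[]]; nra.
  - apply Rdiv_lt_0_compat; nra. Qed.
Ltac case9 i Hi := destruct i as [|[|[|[|[|[|[|[|[|[|i]]]]]]]]]]; try (exfalso; unfold in9 in Hi; lia).

Lemma mmul_assoc A B C i j : mmul (mmul A B) C i j = mmul A (mmul B C) i j.
Proof. unfold mmul; simpl; ring. Qed.

Lemma mmul_ext_r A B B' i j : (forall k, in9 k -> B k j = B' k j) -> mmul A B i j = mmul A B' i j.
Proof. intros H; unfold mmul; simpl; rewrite !H by (unfold in9; lia); reflexivity. Qed.

Lemma mmul_ext_l A A' B i j : (forall k, in9 k -> A i k = A' i k) -> mmul A B i j = mmul A' B i j.
Proof. intros H; unfold mmul; simpl; rewrite !H by (unfold in9; lia); reflexivity. Qed.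

Lemma id_l B i j : in9 i -> mmul (fun i j => if Nat.eqb i j then 1 else 0) B i j = B i j.
Proof. intros Hi. case9 i Hi; unfold mmul; simpl; ring. Qed.

Definition isdiag (D : mat) := forall i j, in9 i -> in9 j -> i <> j -> D i j = 0.

Lemma diag_l D B k j : isdiag D -> in9 k -> mmul D B k j = D k k * B k j.
Proof. intros HD Hk.
  rewrite (mmul_ext_l D (fun i j => if Nat.eqb i j then D i i else 0)).
  - case9 k Hk; unfold mmul; simpl; ring.
  - intros m Hm. destruct (Nat.eqb_spec k m); [subst; reflexivity | apply HD; auto].
Qed.

Lemma diag_r A D i m : isdiag D -> in9 m -> mmul A D i m = A i m * D m m.
Proof. intros HD Hm.
  rewrite (mmul_ext_r A D (fun i j => if Nat.eqb i j then D j j else 0)).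
  - case9 m Hm; unfold mmul; simpl; ring.
  - intros k Hk. destruct (Nat.eqb_spec k m); [subst; reflexivity | apply HD; auto].
Qed.

Lemma notdiag a b c d : a <= 0 -> ~ real_diagonalizable (Jx a b c d).
Proof. intros Ha [P [Q [D [HPQ [HD HJ]]]]].
  set (J := Jx a b c d) in *.
  assert (QJ : forall k j, in9 k -> in9 j -> mmul Q J k j = D k k * Q k j).
  { intros k j Hk Hj.
    rewrite (mmul_ext_r Q J (mmul (mmul P D) Q)) by (intros; apply HJ; auto).
    rewrite <- mmul_assoc.
    rewrite (mmul_ext_l _ (mmul (mmul Q P) D)) by (intros; symmetry; apply mmul_assoc).
    rewrite (mmul_ext_l _ D).
    - apply diag_l; auto.
    - intros m Hm. rewrite (mmul_ext_l _ (fun i j => if Nat.eqb i j then 1 else 0)).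
      + apply id_l; auto.
      + intros; apply HPQ; auto. }
  assert (Hz : forall k, in9 k -> D k k * Q k 2%nat = 0).
  { intros k Hk.
    assert (E1 : mmul Q (mmul J J) k 2%nat = a * Q k 2%nat).
    { rewrite (mmul_ext_r Q _ (fun i j => if Nat.eqb i 2 then a else 0)).
      - unfold mmul; simpl; ring.
      - intros i Hi. case9 i Hi; unfold mmul, J, Jx; simpl; ring. }
    assert (E2 : mmul Q (mmul J J) k 2%nat = D k k * (D k k * Q k 2%nat)).
    { rewrite <- mmul_assoc.
      rewrite (mmul_ext_l _ (fun _ m => D k k * Q k m)) by (intros; apply QJ; auto).
      rewrite <- (QJ k 2%nat) by (auto; unfold in9; lia).
      unfold mmul; simpl; ring. }
    rewrite E1 in E2.
    set (q := Q k 2%nat) in *. set (x := D k k) in *.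
    assert (HH : (x*q)*(x*q) = a*(q*q)).
    { replace ((x*q)*(x*q)) with (q*(x*(x*q))) by ring. rewrite <- E2. ring. }
    assert (0 <= q*q) by nra.
    assert ((x*q)*(x*q) <= 0) by nra.
    nra. }
  assert (H12 := HJ 1%nat 2%nat ltac:(unfold in9; lia) ltac:(unfold in9; lia)).
  change (1 = mmul (mmul P D) Q 1%nat 2%nat) in H12.
  rewrite (mmul_ext_l _ (fun _ m => P 1%nat m * D m m)) in H12 by (intros; apply diag_r; auto).
  assert (mmul (fun _ m => P 1%nat m * D m m) Q 1%nat 2%nat
          = mmul (fun _ m => P 1%nat m) (fun m j => D m m * Q m j) 1%nat 2%nat)
    by (unfold mmul; simpl; ring).
  rewrite H, (mmul_ext_r _ _ (fun _ _ => 0)) in H12 by (intros; apply Hz; auto).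
  unfold mmul in H12; simpl in H12. lra.
Qed.
Definition Pm (al be ga d : R) : mat := fun i j =>
  match i, j with
  | 1%nat, 1%nat => 1 | 1%nat, 2%nat => 1/al | 2%nat, 2%nat => 1 | 5%nat, 2%nat => al | 8%nat, 2%nat => d/al
  | 3%nat, 3%nat => 1 | 6%nat, 3%nat => be | 4%nat, 4%nat => 1 | 7%nat, 4%nat => ga
  | 1%nat, 5%nat => -1/al | 2%nat, 5%nat => 1 | 5%nat, 5%nat => -al | 8%nat, 5%nat => -d/al
  | 3%nat, 6%nat => 1 | 6%nat, 6%nat => -be | 4%nat, 7%nat => 1 | 7%nat, 7%nat => -ga
  | 8%nat, 8%nat => 1 | 9%nat, 9%nat => 1
  | _, _ => 0 end.

Definition Qm (al be ga d : R) : mat := fun i j =>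
  match i, j with
  | 1%nat, 1%nat => 1 | 1%nat, 5%nat => -1/(al*al)
  | 2%nat, 2%nat => 1/2 | 2%nat, 5%nat => 1/(2*al)
  | 3%nat, 3%nat => 1/2 | 3%nat, 6%nat => 1/(2*be)
  | 4%nat, 4%nat => 1/2 | 4%nat, 7%nat => 1/(2*ga)
  | 5%nat, 2%nat => 1/2 | 5%nat, 5%nat => -1/(2*al)
  | 6%nat, 3%nat => 1/2 | 6%nat, 6%nat => -1/(2*be)
  | 7%nat, 4%nat => 1/2 | 7%nat, 7%nat => -1/(2*ga)
  | 8%nat, 8%nat => 1 | 8%nat, 5%nat => -d/(al*al)
  | 9%nat, 9%nat => 1
  | _, _ => 0 end.

Definition dv (al be ga : R) (i : nat) : R :=
  match i with 2%nat => al | 3%nat => be | 4%nat => ga | 5%nat => -al | 6%nat => -be | 7%nat => -ga | _ => 0 end.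

Definition Dm al be ga : mat := fun i j => if Nat.eqb i j then dv al be ga i else 0.

Lemma isdiag_ok al be ga d : 0 < al -> 0 < be -> 0 < ga ->
  real_diagonalizable (Jx (al*al) (be*be) (ga*ga) d).
Proof. intros. exists (Pm al be ga d), (Qm al be ga d), (Dm al be ga).
  split; [|split].
  - intros i j Hi Hj. case9 i Hi; case9 j Hj; unfold mmul, Pm, Qm; simpl; split; field; lra.
  - intros i j Hi Hj Hij. unfold Dm. destruct (Nat.eqb_spec i j); [contradiction|reflexivity].
  - intros i j Hi Hj. case9 i Hi; case9 j Hj; unfold mmul, Pm, Qm, Dm, Jx; simpl; field; lra.
Qed.

Lemma ex_T1 l1 l2 l3 : 0 < l1 -> 0 < l2 -> 0 < l3 ->
  ex_derive (fun t => tau (vec3 l1 l2 l3) (vec3 t 0 0) 1%nat) 0.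
Proof. intros.
  unfold tau, wfun, sigmaB; cbv [vec3 oth1 oth2 Nat.eqb].
  apply (taud (fun t => t) (fun t => l1 - gfun l1 l2 t 0 - gfun l1 l3 t 0)
     (fun t => (l1 - gfun l1 l2 t 0 - gfun l1 l3 t 0) + 2 * gfun l2 l3 0 0)).
  - apply sd; apply gder; lra.
  - apply wd. apply sd; apply gder; lra.
  - apply idd.
  - cbv beta. apply Tden. apply key; auto. apply gpos; auto.
Qed.

Lemma ex_T2 l1 l2 l3 : 0 < l1 -> 0 < l2 -> 0 < l3 ->
  ex_derive (fun t => tau (vec3 l1 l2 l3) (vec3 0 t 0) 2%nat) 0.
Proof. intros.
  unfold tau, wfun, sigmaB; cbv [vec3 oth1 oth2 Nat.eqb].
  apply (taud (fun t => t) (fun t => l2 - gfun l2 l1 t 0 - gfun l2 l3 t 0)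
     (fun t => (l2 - gfun l2 l1 t 0 - gfun l2 l3 t 0) + 2 * gfun l1 l3 0 0)).
  - apply sd; apply gder; lra.
  - apply wd. apply sd; apply gder; lra.
  - apply idd.
  - cbv beta. apply Tden. apply key; auto. apply gpos; auto.
Qed.

Lemma ex_T3 l1 l2 l3 : 0 < l1 -> 0 < l2 -> 0 < l3 ->
  ex_derive (fun t => tau (vec3 l1 l2 l3) (vec3 0 0 t) 3%nat) 0.
Proof. intros.
  unfold tau, wfun, sigmaB; cbv [vec3 oth1 oth2 Nat.eqb].
  apply (taud (fun t => t) (fun t => l3 - gfun l3 l1 t 0 - gfun l3 l2 t 0)
     (fun t => (l3 - gfun l3 l1 t 0 - gfun l3 l2 t 0) + 2 * gfun l1 l2 0 0)).
  - apply sd; apply gder; lra.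
  - apply wd. apply sd; apply gder; lra.
  - apply idd.
  - cbv beta. apply Tden. apply key; auto. apply gpos; auto.
Qed.

Theorem mainTheorem13 (l1 l2 l3 a b c d : R) :
  0 < l1 -> 0 < l2 -> 0 < l3 ->
  derivable_pt_lim (fun t => E3 (vec3 l1 l2 l3) (vec3 t 0 0) 1%nat 1%nat 1%nat) 0 a ->
  derivable_pt_lim (fun t => E3 (vec3 l1 l2 l3) (vec3 0 t 0) 1%nat 1%nat 2%nat) 0 b ->
  derivable_pt_lim (fun t => E3 (vec3 l1 l2 l3) (vec3 0 0 t) 1%nat 1%nat 3%nat) 0 c ->
  derivable_pt_lim (fun t => E3 (vec3 l1 l2 l3) (vec3 t 0 0) 1%nat 2%nat 2%nat) 0 d ->
  (real_diagonalizable (Jx a b c d) <-> 0 < sigmaB (vec3 l1 l2 l3) (vec3 0 0 0) 1%nat) /\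
  (0 < sigmaB (vec3 l1 l2 l3) (vec3 0 0 0) 1%nat <->
     0 < 3 * l1 ^ 2 + l1 * (l2 + l3) - l2 * l3).
Proof.
  intros H1 H2 H3 Ha Hb Hc Hd.
  apply deriv_tT with (T := fun t => tau (vec3 l1 l2 l3) (vec3 t 0 0) 1%nat) in Ha;
    [| intro t; reflexivity | apply ex_T1; auto].
  apply deriv_tT with (T := fun t => (1 - tau (vec3 l1 l2 l3) (vec3 0 t 0) 2%nat) / 2) in Hb;
    [| intro t; cbv [E3 vec3 Nat.eqb andb negb]; field | apply halfd, ex_T2; auto].
  apply deriv_tT with (T := fun t => (1 - tau (vec3 l1 l2 l3) (vec3 0 0 t) 3%nat) / 2) in Hc;
    [| intro t; cbv [E3 vec3 Nat.eqb andb negb]; field | apply halfd, ex_T3; auto].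
  assert (Ea : a = Tf (l1 - gfun l1 l2 0 0 - gfun l1 l3 0 0) (gfun l2 l3 0 0)) by (rewrite Ha; reflexivity).
  assert (Eb : b = (1 - Tf (l2 - gfun l2 l1 0 0 - gfun l2 l3 0 0) (gfun l1 l3 0 0)) / 2) by (rewrite Hb; reflexivity).
  assert (Ec : c = (1 - Tf (l3 - gfun l3 l1 0 0 - gfun l3 l2 0 0) (gfun l1 l2 0 0)) / 2) by (rewrite Hc; reflexivity).
  assert (Es : sigmaB (vec3 l1 l2 l3) (vec3 0 0 0) 1%nat = l1 - gfun l1 l2 0 0 - gfun l1 l3 0 0) by reflexivity.
  rewrite Es.
  assert (Pb : 0 < b) by (rewrite Eb; apply Tf_half; [apply key | apply gpos]; auto).
  assert (Pc : 0 < c) by (rewrite Ec; apply Tf_half; [apply key | apply gpos]; auto).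
  assert (Sa : 0 < a <-> 0 < l1 - gfun l1 l2 0 0 - gfun l1 l3 0 0)
    by (rewrite Ea; apply Tf_sign; [apply key | apply gpos]; auto).
  split; [| apply s1_poly; auto].
  rewrite <- Sa. split; intro H.
  - destruct (Rlt_or_le 0 a) as [|Hle]; auto. exfalso. exact (notdiag a b c d Hle H).
  - replace a with (sqrt a * sqrt a) by (apply sqrt_sqrt; lra).
    replace b with (sqrt b * sqrt b) by (apply sqrt_sqrt; lra).
    replace c with (sqrt c * sqrt c) by (apply sqrt_sqrt; lra).
    apply isdiag_ok; apply sqrt_lt_R0; auto.
Qed.
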